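(* Let $\hat\gamma,\lambda,\Gamma,a,b,\tau,\mu_f>0$ with $a>b$, $a+b<1$, $2a+3b<2$, $\Gamma\ge1$ and $\Gamma\ge\big(\frac{4}{\hat\gamma\lambda\mu_f\tau}\big)^{1/(1-a-b)}$. Define $\hat\gamma_k=\hat\gamma/(k+\Gamma)^a$, $\lambda_k=\lambda/(k+\Gamma)^b$ and $\Lambda_k=|1-\lambda_{k+1}/\lambda_k|$ for $k\ge0$. Suppose moreover that there are numbers $\gamma_{i,k}\ge0$ ($i\in[m]$, $k\ge0$) with $\max_j\gamma_{j,k}=\hat\gamma_k$, nonnegative vectors $u,v\in\mathbb{R}^m$ and $\theta>0$ with $\frac1m\sum_iu_i\gamma_{i,k}v_i\ge\theta\hat\gamma_k$ for all $k\ge0$. Then: (i) $(\lambda_k)$ is a strictly positive decreasing sequence with $\lambda_k\to0$, and $(\hat\gamma_k)$ is a strictly positive decreasing sequence with $\hat\gamma_k\to0$ and $\hat\gamma_k/\lambda_k\to0$; (ii) $\Lambda_k/\lambda_k\to0$, $\Lambda_{k+1}\le\Lambda_k$ for all $k\ge0$, and $\Lambda_{k-1}\le\frac1{k+\Gamma}$ for all $k\ge1$; (iii) for all $k\ge1$, $\dfrac{(k+\Gamma)\hat\gamma_k\lambda_k}{(k+\Gamma-1)\hat\gamma_{k-1}\lambda_{k-1}}\le1+0.5\mu_f\hat\gamma_k\lambda_k\tau$. *)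

(* Defs.v *)
From Stdlib Require Export Reals Lra Lia.
Open Scope R_scope.

Definition stepg (gh Gam a : R) (k : nat) : R := gh / Rpower (INR k + Gam) a.
Definition stepl (lam Gam b : R) (k : nat) : R := lam / Rpower (INR k + Gam) b.
Definition bigLam (lam Gam b : R) (k : nat) : R :=
  Rabs (1 - stepl lam Gam b (S k) / stepl lam Gam b k).

(* finite sum over i = 0 .. m-1 (indices of [m] shifted to start at 0) *)
Fixpoint fsum (m : nat) (f : nat -> R) : R :=
  match m with O => 0 | S m' => fsum m' f + f m' end.

(* Main.v *)
Require Import Defs.
From Stdlib Require Import Reals Lra Lia.
Open Scope R_scope.
Lemma Rpow_pos x e : 0 < Rpower x e.
Proof. unfold Rpower; apply exp_pos. Qed.

Lemma Rpower_1base e : Rpower 1 e = 1.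
Proof. unfold Rpower; rewrite ln_1, Rmult_0_r; apply exp_0. Qed.

Lemma ln_nonpos r : 0 < r -> r <= 1 -> ln r <= 0.
Proof.
  intros H0 H1. destruct H1 as [H1|H1].
  - rewrite <- ln_1; left; apply ln_increasing; lra.
  - subst; rewrite ln_1; lra.
Qed.

Lemma rpow_small r b : 0 < r -> r <= 1 -> 0 <= b <= 1 -> r <= Rpower r b <= 1.
Proof.
  intros H0 H1 Hb. pose proof (ln_nonpos r H0 H1). split.
  - rewrite <- (exp_ln r) at 1 by lra. unfold Rpower.
    destruct (Req_dec (b * ln r) (ln r)) as [E|E]; [rewrite E; lra|].
    left; apply exp_increasing; nra.
  - rewrite <- (Rpower_1base b). apply Rle_Rpower_l; lra.
Qed.

Lemma squeeze0 (u w : nat -> R) : (forall n, 0 <= u n <= w n) -> Un_cv w 0 -> Un_cv u 0.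
Proof.
  intros H Hw eps He. destruct (Hw eps He) as [N HN]. exists N. intros n Hn.
  specialize (HN n Hn). specialize (H n). unfold R_dist in *.
  rewrite Rminus_0_r in *. rewrite Rabs_right in * by lra. lra.
Qed.

Lemma cv0 C e Gam : 0 < e -> 0 < Gam -> 0 <= C ->
  Un_cv (fun n => C / Rpower (INR n + Gam) e) 0.
Proof.
  intros He HG HC eps Heps.
  destruct (INR_unbounded (Rpower (C/eps + 1) (1/e))) as [N HN].
  exists N. intros n Hn. unfold R_dist. rewrite Rminus_0_r.
  assert (HnN : INR N <= INR n) by (apply le_INR; lia).
  pose proof (pos_INR n).
  set (x := INR n + Gam).
  assert (Hx : Rpower (C/eps+1) (1/e) < x) by (unfold x; lra).
  assert (Hp : C/eps + 1 < Rpower x e).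
  { replace (C/eps+1) with (Rpower (Rpower (C/eps + 1) (1/e)) e).
    - apply Rlt_Rpower_l; [lra|split; [apply Rpow_pos|lra]].
    - rewrite Rpower_mult. replace (1/e*e) with 1 by (field; lra).
      apply Rpower_1. assert (0 <= C/eps) by (unfold Rdiv; apply Rmult_le_pos; [lra| left; apply Rinv_0_lt_compat; lra]). lra. }
  pose proof (Rpow_pos x e).
  rewrite Rabs_right.
  - apply (Rmult_lt_reg_r (Rpower x e)); auto. unfold Rdiv at 1.
    rewrite Rmult_assoc, Rinv_l by lra. 
    assert (C = eps * (C/eps)) by (field; lra). nra.
  - apply Rle_ge; unfold Rdiv; apply Rmult_le_pos; [lra| left; apply Rinv_0_lt_compat; lra].
Qed.

Lemma decr C x y e : 0 <= C -> 0 < x <= y -> 0 <= e -> C / Rpower y e <= C / Rpower x e.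
Proof.
  intros. unfold Rdiv; apply Rmult_le_compat_l; auto.
  apply Rinv_le_contravar; [apply Rpow_pos|]. apply Rle_Rpower_l; lra.
Qed.

Lemma divpos C y : 0 < C -> 0 < y -> 0 < C / y.
Proof. intros; unfold Rdiv; apply Rmult_lt_0_compat; auto; apply Rinv_0_lt_compat; auto. Qed.

Lemma bigLam_eq lam Gam b k : 0 < lam -> 0 < Gam -> 0 <= b <= 1 ->
  let x := INR k + Gam in
  bigLam lam Gam b k = 1 - Rpower (x / (x+1)) b /\
  x/(x+1) <= Rpower (x/(x+1)) b <= 1.
Proof.
  intros Hl HG Hb x. pose proof (pos_INR k).
  assert (Hx : 0 < x) by (unfold x; lra).
  assert (Hr : 0 < x/(x+1)) by (apply divpos; lra).
  assert (Hr1 : x/(x+1) <= 1).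
  { unfold Rdiv. apply (Rmult_le_reg_r (x+1)); [lra|].
    rewrite Rmult_assoc, Rinv_l by lra. lra. }
  pose proof (rpow_small _ b Hr Hr1 Hb) as Hs. split; auto.
  unfold bigLam, stepl. rewrite S_INR. fold x.
  replace (INR k + 1 + Gam) with (x+1) by (unfold x; ring).
  assert (E : Rpower x b = Rpower (x/(x+1)) b * Rpower (x+1) b).
  { rewrite Rpower_mult_distr by lra. f_equal. field; lra. }
  pose proof (Rpow_pos (x+1) b). pose proof (Rpow_pos (x/(x+1)) b).
  replace (lam / Rpower (x + 1) b / (lam / Rpower x b)) with (Rpower (x/(x+1)) b).
  - rewrite Rabs_right; lra.
  - rewrite E. field. lra.
Qed.
Theorem lemma1 (gh lam Gam a b tau muf : R) (m : nat)
  (gam : nat -> nat -> R) (u v : nat -> R) (theta : R)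
  (Hgh : 0 < gh) (Hlam : 0 < lam) (HGam0 : 0 < Gam) (Ha : 0 < a) (Hb : 0 < b)
  (Htau : 0 < tau) (Hmuf : 0 < muf)
  (Hab : b < a) (Hab1 : a + b < 1) (Hab2 : 2 * a + 3 * b < 2)
  (HGam1 : 1 <= Gam)
  (HGam2 : Rpower (4 / (gh * lam * muf * tau)) (1 / (1 - a - b)) <= Gam)
  (Hgam_nn : forall i k, (i < m)%nat -> 0 <= gam i k)
  (Hgam_max : forall k, (forall j, (j < m)%nat -> gam j k <= stepg gh Gam a k) /\
                        (exists j, (j < m)%nat /\ gam j k = stepg gh Gam a k))
  (Hu : forall i, (i < m)%nat -> 0 <= u i)
  (Hv : forall i, (i < m)%nat -> 0 <= v i)
  (Htheta : 0 < theta)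
  (Hsum : forall k, (1 / INR m) * fsum m (fun i => u i * gam i k * v i)
                    >= theta * stepg gh Gam a k) :
  (* (i) *)
  ((forall k, 0 < stepl lam Gam b k) /\
   (forall k, stepl lam Gam b (S k) <= stepl lam Gam b k) /\
   Un_cv (stepl lam Gam b) 0 /\
   (forall k, 0 < stepg gh Gam a k) /\
   (forall k, stepg gh Gam a (S k) <= stepg gh Gam a k) /\
   Un_cv (stepg gh Gam a) 0 /\
   Un_cv (fun k => stepg gh Gam a k / stepl lam Gam b k) 0) /\
  (* (ii) *)
  (Un_cv (fun k => bigLam lam Gam b k / stepl lam Gam b k) 0 /\
   (forall k, bigLam lam Gam b (S k) <= bigLam lam Gam b k) /\
   (forall k, (1 <= k)%nat -> bigLam lam Gam b (k - 1) <= 1 / (INR k + Gam))) /\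
  (* (iii) *)
  (forall k, (1 <= k)%nat ->
     ((INR k + Gam) * stepg gh Gam a k * stepl lam Gam b k) /
     ((INR k + Gam - 1) * stepg gh Gam a (k - 1) * stepl lam Gam b (k - 1))
     <= 1 + (1 / 2) * muf * stepg gh Gam a k * stepl lam Gam b k * tau).
Proof.
  assert (Hx : forall k, 0 < INR k + Gam) by (intro k; pose proof (pos_INR k); lra).
  assert (Hb1 : 0 <= b <= 1) by lra.
  assert (Hlpos : forall k, 0 < stepl lam Gam b k) by (intro k; apply divpos; auto; apply Rpow_pos).
  assert (Hgpos : forall k, 0 < stepg gh Gam a k) by (intro k; apply divpos; auto; apply Rpow_pos).
  split; [|split].
  -
    split; [exact Hlpos|]. split.
    { intro k; unfold stepl; apply decr; try lra. rewrite S_INR; specialize (Hx k); lra. }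
    split. { unfold stepl; apply cv0; lra. }
    split; [exact Hgpos|]. split.
    { intro k; unfold stepg; apply decr; try lra. rewrite S_INR; specialize (Hx k); lra. }
    split. { unfold stepg; apply cv0; lra. }
    apply squeeze0 with (w := fun k => (gh/lam) / Rpower (INR k + Gam) (a - b)).
    2: { apply cv0; try lra. left; apply divpos; lra. }
    intro k. 
    assert (E : stepg gh Gam a k / stepl lam Gam b k = (gh/lam) / Rpower (INR k + Gam) (a - b)).
    { unfold stepg, stepl. replace a with ((a - b) + b) at 1 by ring. rewrite Rpower_plus.
      pose proof (Rpow_pos (INR k + Gam) (a-b)). pose proof (Rpow_pos (INR k + Gam) b).
      field. lra. }
    rewrite E. split; [left; apply divpos; [apply divpos; lra|apply Rpow_pos]|lra].
  -
    split; [|split].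
    + apply squeeze0 with (w := fun k => (1/lam) / Rpower (INR k + Gam) (1 - b)).
      2: { apply cv0; try lra. left; apply divpos; lra. }
      intro k. destruct (bigLam_eq lam Gam b k Hlam HGam0 Hb1) as [E [H1 H2]].
      set (x := INR k + Gam) in *. specialize (Hx k). fold x in Hx.
      rewrite E. unfold stepl. fold x.
      pose proof (Rpow_pos x (1-b)). pose proof (Rpow_pos x b).
      assert (Ex : x = Rpower x (1-b) * Rpower x b).
      { rewrite <- Rpower_plus. replace (1 - b + b) with 1 by ring. rewrite Rpower_1; lra. }
      replace ((1 - Rpower (x / (x + 1)) b) / (lam / Rpower x b))
        with ((1 - Rpower (x / (x + 1)) b) * Rpower x b / lam) by (field; lra).
      split.
      * apply Rmult_le_pos; [apply Rmult_le_pos; lra| left; apply Rinv_0_lt_compat; lra].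
      * assert (Hw : 0 < (1/lam) / Rpower x (1-b)) by (apply divpos; [apply divpos|]; lra).
        assert (Hxr : x / (x+1) * (x+1) = x) by (field; lra).
        assert (Hk : (1 - Rpower (x / (x + 1)) b) * x <= 1) by nra.
        set (R0 := Rpower (x / (x + 1)) b) in *.
        set (p := Rpower x (1-b)) in *. set (q := Rpower x b) in *.
        replace ((1 - R0) * q / lam) with (((1 - R0) * x) * ((1/lam) / p)).
        2: { rewrite Ex. field. lra. }
        nra.
    + intro k. destruct (bigLam_eq lam Gam b k Hlam HGam0 Hb1) as [E [H1 H2]].
      destruct (bigLam_eq lam Gam b (S k) Hlam HGam0 Hb1) as [E' [H1' H2']].
      rewrite E, E'. rewrite S_INR. specialize (Hx k).
      set (x := INR k + Gam) in *.
      replace (INR k + 1 + Gam) with (x + 1) by (unfold x; ring).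
      assert (Hrr : x/(x+1) <= (x+1)/(x+1+1)).
      { apply (Rmult_le_reg_r ((x+1)*(x+1+1))). nra.
        replace (x / (x + 1) * ((x + 1) * (x + 1 + 1))) with (x*(x+2)) by (field; lra).
        replace ((x + 1) / (x + 1 + 1) * ((x + 1) * (x + 1 + 1))) with ((x+1)*(x+1)) by (field; lra).
        nra. }
      assert (0 < x/(x+1)) by (apply divpos; lra).
      assert (Rpower (x / (x + 1)) b <= Rpower ((x+1) / (x + 1 + 1)) b) by (apply Rle_Rpower_l; lra).
      lra.
    + intros k Hk. destruct (bigLam_eq lam Gam b (k-1) Hlam HGam0 Hb1) as [E [H1 H2]].
      rewrite E. rewrite minus_INR in * by lia. simpl INR in *. specialize (Hx k).
      set (y := INR k + Gam) in *.
      replace (INR k - 1 + Gam) with (y - 1) in * by (unfold y; ring).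
      replace (y - 1 + 1) with y in * by ring.
      assert (Hr : (y-1)/y = 1 - 1/y) by (field; lra). lra.
  - intros k Hk. unfold stepg, stepl.
    rewrite minus_INR by lia. simpl INR.
    assert (H1k : 1 <= INR k) by (replace 1 with (INR 1) by reflexivity; apply le_INR; lia).
    set (x := INR k + Gam) in *.
    replace (INR k - 1 + Gam) with (x - 1) by (unfold x; ring).
    assert (Hx2 : 2 <= x) by (unfold x; lra).
    assert (HGx : Gam <= x) by (unfold x; lra).
    set (K := gh * lam * muf * tau).
    assert (HK : 0 < K) by (unfold K; repeat apply Rmult_lt_0_compat; lra).
    set (c := 1 - a - b).
    assert (Hc : 0 < c) by (unfold c; lra).
    assert (HGc : 4 / K <= Rpower Gam c).
    { replace (4/K) with (Rpower (Rpower (4 / K) (1 / c)) c).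
      - apply Rle_Rpower_l; [lra|split; [apply Rpow_pos|]]. unfold K, c; exact HGam2.
      - rewrite Rpower_mult. replace (1/c*c) with 1 by (field; lra).
        apply Rpower_1. apply divpos; lra. }
    assert (HXc : Rpower Gam c <= Rpower x c) by (apply Rle_Rpower_l; lra).
    assert (Ex : x = Rpower x c * Rpower x a * Rpower x b).
    { rewrite <- !Rpower_plus. replace (c + a + b) with 1 by (unfold c; ring).
      rewrite Rpower_1; lra. }
    assert (HA : Rpower (x-1) a <= Rpower x a) by (apply Rle_Rpower_l; lra).
    assert (HB : Rpower (x-1) b <= Rpower x b) by (apply Rle_Rpower_l; lra).
    pose proof (Rpow_pos x a). pose proof (Rpow_pos x b). pose proof (Rpow_pos x c).
    pose proof (Rpow_pos (x-1) a). pose proof (Rpow_pos (x-1) b).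
    set (A := Rpower x a) in *. set (B := Rpower x b) in *. set (C := Rpower x c) in *.
    set (A' := Rpower (x-1) a) in *. set (B' := Rpower (x-1) b) in *.
    replace (x * (gh / A) * (lam / B) / ((x - 1) * (gh / A') * (lam / B')))
      with ((x / (x-1)) * ((A' * B') / (A * B))) by (field; repeat split; lra).
    replace (1 + 1 / 2 * muf * (gh / A) * (lam / B) * tau) with (1 + K / (2 * (A*B)))
      by (unfold K; field; lra).
    assert (HAB : 0 < A * B) by nra.
    assert (Hq : A' * B' / (A * B) <= 1).
    { apply (Rmult_le_reg_r (A*B)); auto. replace (A' * B' / (A * B) * (A * B)) with (A'*B') by (field; lra).
      rewrite Rmult_1_l; apply Rmult_le_compat; lra. }
    assert (Hq0 : 0 <= A' * B' / (A * B)) by (left; apply divpos; nra).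
    assert (Hxy : x / (x-1) = 1 + 1/(x-1)) by (field; lra).
    assert (H1y : 1/(x-1) <= 2/x).
    { apply (Rmult_le_reg_r ((x-1)*x)). nra.
      replace (1 / (x - 1) * ((x - 1) * x)) with x by (field; lra).
      replace (2 / x * ((x - 1) * x)) with (2*(x-1)) by (field; lra). lra. }
    assert (H2x : 2/x <= K/(2*(A*B))).
    { rewrite Ex. apply (Rmult_le_reg_r (C*A*B*2)). nra.
      replace (2 / (C * A * B) * (C * A * B * 2)) with 4 by (field; lra).
      replace (K / (2 * (A * B)) * (C * A * B * 2)) with (K * C) by (field; lra).
      apply (Rmult_le_compat_l K) in HGc; [|lra].
      replace (K * (4/K)) with 4 in HGc by (field; lra). nra. }
    assert (0 < x / (x-1)) by (apply divpos; lra).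
    assert (x / (x - 1) * (A' * B' / (A * B)) <= x / (x-1)) by nra.
    lra.
Qed.
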